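(* Let $G$ be a group, $K$ a zero-sum-free semifield, and $V$ a representation of $G$ over $K$. Then $V$ is indecomposable if and only if $G$ acts transitively on the set of basis lines of $V$. In addition, any representation $V$ of $G$ over $K$ may be uniquely decomposed as a direct sum of indecomposable representations.
   Context: All semirings are commutative. A semifield is a semiring whose nonzero elements form a multiplicative group; it is zero-sum-free if $a+b=0$ implies $a=b=0$. A representation of $G$ over $K$ is a $K$-linear action of $G$ on a free module $K^n$; a subrepresentation is a $G$-stable submodule; $V$ is indecomposable if it cannot be written as a direct sum of nontrivial subrepresentations. A basis line of a free $K$-module is a submodule spanned by a single vector of a basis; the set of basis lines does not depend on the basis, and $G$ acts on it by $g\cdot\mathrm{span}(v)=\mathrm{span}(gv)$. *)

(* Defs.v *)
From HB Require Import structures.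
From mathcomp Require Import all_boot all_algebra.
Set Implicit Arguments. Unset Strict Implicit. Unset Printing Implicit Defensive.
Import GRing.Theory.
Local Open Scope ring_scope.

Definition semifield (K : comNzSemiRingType) : Prop :=
  forall x : K, x != 0 -> exists y : K, x * y = 1.

Definition zero_sum_free (K : comNzSemiRingType) : Prop :=
  forall a b : K, a + b = 0 -> a = 0 /\ b = 0.

Definition is_group (G : Type) (mul : G -> G -> G) (one : G) (inv : G -> G) : Prop :=
  [/\ (forall x y z, mul x (mul y z) = mul (mul x y) z),
      (forall x, mul one x = x), (forall x, mul x one = x),
      (forall x, mul (inv x) x = one) & (forall x, mul x (inv x) = one)].

(* A representation: a K-linear action of G on the free module K^n = 'rV[K]_n. *)
Definition is_representation (K : comNzSemiRingType) (G : Type) (mul : G -> G -> G)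
    (one : G) (n : nat) (act : G -> 'rV[K]_n -> 'rV[K]_n) : Prop :=
  [/\ (forall v, act one v = v),
      (forall g h v, act (mul g h) v = act g (act h v)),
      (forall g v w, act g (v + w) = act g v + act g w) &
      (forall g (k : K) v, act g (k *: v) = k *: act g v)].

Definition is_submodule (K : comNzSemiRingType) (n : nat) (W : 'rV[K]_n -> Prop) : Prop :=
  [/\ W 0, (forall v w, W v -> W w -> W (v + w)) & (forall (k : K) v, W v -> W (k *: v))].

Definition is_subrep (K : comNzSemiRingType) (G : Type) (n : nat)
    (act : G -> 'rV[K]_n -> 'rV[K]_n) (W : 'rV[K]_n -> Prop) : Prop :=
  is_submodule W /\ (forall g v, W v -> W (act g v)).

Definition nonzero_sub (K : comNzSemiRingType) (n : nat) (W : 'rV[K]_n -> Prop) : Prop :=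
  exists v, W v /\ v != 0.

Definition direct_sum2 (K : comNzSemiRingType) (n : nat) (W W1 W2 : 'rV[K]_n -> Prop) : Prop :=
  [/\ (forall v, W1 v -> W v), (forall v, W2 v -> W v),
      (forall v, W v -> exists a b, [/\ W1 a, W2 b & v = a + b]) &
      (forall a b a' b', W1 a -> W2 b -> W1 a' -> W2 b' -> a + b = a' + b' -> a = a' /\ b = b')].

Definition direct_sum (K : comNzSemiRingType) (n k : nat) (W : 'rV[K]_n -> Prop)
    (Ws : 'I_k -> 'rV[K]_n -> Prop) : Prop :=
  [/\ (forall j v, Ws j v -> W v),
      (forall v, W v -> exists w : 'I_k -> 'rV[K]_n, (forall j, Ws j (w j)) /\ v = \sum_(j < k) w j) &
      (forall w w' : 'I_k -> 'rV[K]_n, (forall j, Ws j (w j)) -> (forall j, Ws j (w' j)) ->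
          \sum_(j < k) w j = \sum_(j < k) w' j -> forall j, w j = w' j)].

Definition indecomposable (K : comNzSemiRingType) (G : Type) (n : nat)
    (act : G -> 'rV[K]_n -> 'rV[K]_n) (W : 'rV[K]_n -> Prop) : Prop :=
  [/\ is_subrep act W, nonzero_sub W &
      ~ (exists W1 W2, [/\ is_subrep act W1, is_subrep act W2, nonzero_sub W1,
                          nonzero_sub W2 & direct_sum2 W W1 W2])].

Definition fullV (K : comNzSemiRingType) (n : nat) : 'rV[K]_n -> Prop := fun _ => True.

Definition is_basis (K : comNzSemiRingType) (n m : nat) (b : 'I_m -> 'rV[K]_n) : Prop :=
  (forall v, exists c : 'I_m -> K, v = \sum_(i < m) c i *: b i) /\
  (forall c c' : 'I_m -> K, \sum_(i < m) c i *: b i = \sum_(i < m) c' i *: b i ->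
     forall i, c i = c' i).

Definition is_basis_line (K : comNzSemiRingType) (n : nat) (L : 'rV[K]_n -> Prop) : Prop :=
  exists m (b : 'I_m -> 'rV[K]_n) (i : 'I_m),
    is_basis b /\ forall v, L v <-> exists k : K, v = k *: b i.

Definition act_line (K : comNzSemiRingType) (G : Type) (n : nat)
    (act : G -> 'rV[K]_n -> 'rV[K]_n) (g : G) (L : 'rV[K]_n -> Prop) : 'rV[K]_n -> Prop :=
  fun v => exists w, L w /\ v = act g w.

Definition transitive_on_basis_lines (K : comNzSemiRingType) (G : Type) (n : nat)
    (act : G -> 'rV[K]_n -> 'rV[K]_n) : Prop :=
  (exists L : 'rV[K]_n -> Prop, is_basis_line L) /\
  forall L1 L2, is_basis_line L1 -> is_basis_line L2 ->
    exists g, forall v, L2 v <-> act_line act g L1 v.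

(* Main.v *)
Require Import Defs.
From HB Require Import structures.
From mathcomp Require Import all_boot all_algebra.
From Stdlib Require Import ClassicalEpsilon FunctionalExtensionality PropExtensionality.
Set Implicit Arguments. Unset Strict Implicit. Unset Printing Implicit Defensive.
Import GRing.Theory.
Local Open Scope ring_scope.

Definition bo (P : Prop) : bool := if excluded_middle_informative P then true else false.
Lemma boP P : reflect P (bo P).
Proof. by rewrite /bo; case: excluded_middle_informative => h; constructor. Qed.

Lemma pred_ext T (P Q : T -> Prop) : (forall v, P v <-> Q v) -> P = Q.
Proof. move=> h; apply: functional_extensionality => v; apply: propositional_extensionality; exact: h. Qed.

Section Basic.
Variable K : comNzSemiRingType.
Hypothesis sf : semifield K.
Hypothesis zsf : zero_sum_free K.

Lemma mul_eq0K (x y : K) : x * y = 0 -> x = 0 \/ y = 0.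
Proof.
move=> h; case: (eqVneq x 0) => [->|nx]; first by left.
right; have [x' hx'] := sf nx.
by rewrite -[y]mul1r -hx' mulrAC h mul0r.
Qed.

Lemma mul_neq0 (x y : K) : x != 0 -> y != 0 -> x * y != 0.
Proof. move=> nx ny; apply/eqP => /mul_eq0K [] /eqP; by [rewrite (negPf nx)|rewrite (negPf ny)]. Qed.

Lemma sum_eq0K (I : finType) (P : pred I) (F : I -> K) :
  \sum_(i | P i) F i = 0 -> forall i, P i -> F i = 0.
Proof.
move=> h i Pi; move: h; rewrite (bigD1 i) //= => /zsf []; done.
Qed.

Lemma sum_if1 (V : nmodType) (k : nat) (j0 : 'I_k) (F : 'I_k -> V) :
  \sum_(j < k) (if j == j0 then F j else 0) = F j0.
Proof.
rewrite (bigD1 j0) //= eqxx big1 ?addr0 // => j /negPf -> //.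
Qed.

Variable n : nat.
Implicit Types (v w : 'rV[K]_n) (J : pred 'I_n).

Lemma e_entry (j l : 'I_n) : ('e_j : 'rV[K]_n) 0 l = (j == l)%:R.
Proof. by rewrite mxE eqxx /= eq_sym. Qed.

Lemma e_neq0 (j : 'I_n) : ('e_j : 'rV[K]_n) != 0.
Proof. apply/eqP => /rowP /(_ j); rewrite e_entry eqxx mxE; apply/eqP; exact: oner_neq0. Qed.

Lemma sum_e (F : 'I_n -> K) l : (\sum_j F j *: ('e_j : 'rV[K]_n)) 0 l = F l.
Proof.
rewrite summxE (bigD1 l) //= big1 ?addr0; first by rewrite mxE e_entry eqxx mulr1.
by move=> j /negPf hj; rewrite mxE e_entry hj mulr0.
Qed.

Lemma single v (j : 'I_n) : (forall l, l != j -> v 0 l = 0) -> v = v 0 j *: 'e_j.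
Proof.
move=> h; apply/rowP => l; rewrite !mxE eqxx /=.
case: (eqVneq l j) => [->|nlj]; first by rewrite mulr1.
by rewrite (h l nlj) mulr0.
Qed.

Definition Wp (J : pred 'I_n) : 'rV[K]_n -> Prop := fun v => forall l, v 0 l != 0 -> J l.

Lemma Wp_sub J : is_submodule (Wp J).
Proof.
split.
- by move=> l; rewrite mxE eqxx.
- move=> v w hv hw l; rewrite mxE; case Jl: (J l) => //.
  have /eqP-> : v 0 l == 0 by apply: contraT => /hv; rewrite Jl.
  have /eqP-> : w 0 l == 0 by apply: contraT => /hw; rewrite Jl.
  by rewrite addr0 eqxx.
- move=> k v hv l; rewrite mxE; case Jl: (J l) => //.
  have /eqP-> : v 0 l == 0 by apply: contraT => /hv; rewrite Jl.
  by rewrite mulr0 eqxx.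
Qed.

Lemma Wp_e J (j : 'I_n) c : J j -> Wp J (c *: 'e_j).
Proof. move=> Jj l; rewrite mxE e_entry; case: (eqVneq j l) => [<-//|_]; by rewrite mulr0 eqxx. Qed.

Definition proj (J : pred 'I_n) v : 'rV[K]_n := \row_l (if J l then v 0 l else 0).

Lemma Wp_proj J v : Wp J (proj J v).
Proof. move=> l; rewrite mxE; case: (J l) => //; by rewrite eqxx. Qed.

Lemma Wp_projI J (J1 : pred 'I_n) v : Wp J v -> Wp (predI J J1) (proj J1 v).
Proof.
move=> hv l; rewrite mxE /=; case J1l: (J1 l); last by rewrite eqxx.
by move/hv => ->.
Qed.

Lemma proj_split J v : v = proj J v + proj (predC J) v.
Proof. apply/rowP => l; rewrite !mxE /=; case: (J l) => /=; by rewrite ?addr0 ?add0r. Qed.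

Lemma submod_sum (W : 'rV[K]_n -> Prop) (I : finType) (F : I -> 'rV[K]_n) :
  is_submodule W -> (forall i, W (F i)) -> W (\sum_i F i).
Proof.
case=> W0 WD _ hF; elim/big_rec: _ => // i x _; exact: WD.
Qed.

Lemma split_ds J (J1 : pred 'I_n) : direct_sum2 (Wp J) (Wp (predI J J1)) (Wp (predI J (predC J1))).
Proof.
split.
- by move=> v hv l /hv /andP [].
- by move=> v hv l /hv /andP [].
- move=> v hv; exists (proj J1 v), (proj (predC J1) v); split.
  + exact: Wp_projI. + exact: Wp_projI. + exact: proj_split.
- move=> a b a' b' ha hb ha' hb' e.
  have z : forall (x : 'rV[K]_n) (P : pred 'I_n) l, Wp P x -> ~~ P l -> x 0 l = 0.
    by move=> x P l hx; apply: contraNeq => /hx ->.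
  have E l : a 0 l + b 0 l = a' 0 l + b' 0 l by move/rowP: e => /(_ l); rewrite !mxE.
  split; apply/rowP => l; have := E l; case J1l: (J1 l).
  + have nb : ~~ predI J (predC J1) l by rewrite /= J1l andbF.
    by rewrite (z _ _ l hb nb) (z _ _ l hb' nb) !addr0.
  + have na : ~~ predI J J1 l by rewrite /= J1l andbF.
    by rewrite (z _ _ l ha na) (z _ _ l ha' na) !add0r.
  + have nb : ~~ predI J (predC J1) l by rewrite /= J1l andbF.
    by rewrite (z _ _ l hb nb) (z _ _ l hb' nb).
  + have na : ~~ predI J J1 l by rewrite /= J1l andbF.
    by rewrite (z _ _ l ha na) (z _ _ l ha' na) !add0r.
Qed.


Lemma Wp_ee J (j : 'I_n) : J j -> Wp J 'e_j.
Proof. by move=> Jj; rewrite -(scale1r 'e_j); exact: Wp_e. Qed.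

Lemma ds2_swap (W W1 W2 : 'rV[K]_n -> Prop) : direct_sum2 W W1 W2 -> direct_sum2 W W2 W1.
Proof.
case=> h1 h2 h3 h4; split => //.
- by move=> v /h3 [a [b [ha hb ->]]]; exists b, a; split => //; rewrite addrC.
- move=> a b a' b' ha hb ha' hb' e.
  by have [] := h4 b a b' a' hb ha hb' ha'; rewrite // addrC e addrC.
Qed.

Lemma ds2_notboth J (W1 W2 : 'rV[K]_n -> Prop) (j : 'I_n) :
  is_submodule W1 -> is_submodule W2 -> direct_sum2 (Wp J) W1 W2 ->
  W1 'e_j -> W2 'e_j -> False.
Proof.
case=> W10 _ _ [W20 _ _] [_ _ _ u] h1 h2.
have [] := u _ _ _ _ h1 W20 W10 h2; first by rewrite addr0 add0r.
by move=> /eqP; rewrite (negPf (e_neq0 _)).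
Qed.

Lemma ds2_e J (W1 W2 : 'rV[K]_n -> Prop) (j : 'I_n) :
  is_submodule W1 -> is_submodule W2 -> direct_sum2 (Wp J) W1 W2 -> J j ->
  W1 'e_j \/ W2 'e_j.
Proof.
move=> s1 s2 ds Jj; have [_ _ dec _] := ds.
have [a [b [ha hb ee]]] := dec _ (Wp_ee Jj).
have E l : a 0 l + b 0 l = ('e_j : 'rV[K]_n) 0 l by rewrite ee mxE.
have za l : l != j -> a 0 l = 0.
  by move=> nl; have := E l; rewrite e_entry eq_sym (negPf nl) => /zsf [].
have zb l : l != j -> b 0 l = 0.
  by move=> nl; have := E l; rewrite e_entry eq_sym (negPf nl) => /zsf [].
have Ej : a 0 j + b 0 j = 1 by rewrite E e_entry eqxx.
case: (eqVneq (a 0 j) 0) => [a0|na].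
- right; move: Ej; rewrite a0 add0r => b1.
  by have -> : ('e_j : 'rV[K]_n) = b by rewrite (single zb) b1 scale1r.
- left; have [x hx] := sf na.
  have -> : ('e_j : 'rV[K]_n) = x *: a by rewrite (single za) scalerA mulrC hx scale1r.
  by case: s1 => _ _; apply.
Qed.

Lemma ds2_W1 J (W1 W2 : 'rV[K]_n -> Prop) v :
  is_submodule W1 -> is_submodule W2 -> direct_sum2 (Wp J) W1 W2 ->
  W1 v -> forall l, v 0 l != 0 -> W1 'e_l.
Proof.
move=> s1 s2 ds hv.
have [i1 _ _ u] := ds.
have vJ := i1 _ hv.
pose a := \sum_l (if bo (W1 'e_l) then v 0 l else 0) *: ('e_l : 'rV[K]_n).
pose b := \sum_l (if bo (W1 'e_l) then 0 else v 0 l) *: ('e_l : 'rV[K]_n).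
have ha : W1 a.
  apply: submod_sum => // l; case: boP => h; first by case: s1 => _ _; apply.
  by rewrite scale0r; case: s1.
have hb : W2 b.
  apply: submod_sum => // l; case: boP => h; first by rewrite scale0r; case: s2.
  case: (eqVneq (v 0 l) 0) => [->|nv]; first by rewrite scale0r; case: s2.
  case: (ds2_e s1 s2 ds (vJ _ nv)) => // h2.
  by case: s2 => _ _; apply.
have ev : v = a + b.
  apply/rowP => l; rewrite mxE !sum_e; case: (bo _); by rewrite ?addr0 ?add0r.
case: s2 => W20 _ _.
have [_ b0] := u _ _ _ _ ha hb hv W20 (esym (etrans (addr0 v) ev)).
move=> l nv; apply/boP; apply: contraNT nv => nW.
by have := sum_e (fun l => if bo (W1 'e_l) then 0 else v 0 l) l; rewrite -/b b0 (negPf nW) mxE => <-.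
Qed.

Section Family.
Variables (k : nat) (Ws : 'I_k -> 'rV[K]_n -> Prop).
Hypothesis sW : forall j, is_submodule (Ws j).
Hypothesis ds : direct_sum (@fullV K n) Ws.

Lemma dsf_e (i : 'I_n) : exists j, Ws j 'e_i.
Proof.
have [_ dec _] := ds.
have [w [hw ew]] := dec 'e_i I.
have E l : \sum_j w j 0 l = ('e_i : 'rV[K]_n) 0 l by rewrite ew summxE.
have z j l : l != i -> w j 0 l = 0.
  move=> nl; move: (E l); rewrite e_entry eq_sym (negPf nl) => h.
  exact: (sum_eq0K h).
case: (pickP (fun j => w j 0 i != 0)) => [j /= nz|none].
- exists j; have [x hx] := sf nz.
  have -> : ('e_i : 'rV[K]_n) = x *: w j by rewrite [w j](single (z j)) scalerA mulrC hx scale1r.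
  by case: (sW j) => _ _; apply.
- move: (E i); rewrite e_entry eqxx big1; last by move=> j _; move: (none j) => /= /negbFE /eqP.
  by move=> /esym /eqP; rewrite oner_eq0.
Qed.

Lemma dsf_uniq (i : 'I_n) j1 j2 : Ws j1 'e_i -> Ws j2 'e_i -> j1 = j2.
Proof.
move=> h1 h2; have [_ _ u] := ds.
pose w := fun j => if j == j1 then ('e_i : 'rV[K]_n) else 0.
pose w' := fun j => if j == j2 then ('e_i : 'rV[K]_n) else 0.
have hw j : Ws j (w j) by rewrite /w; case: eqP => [->//|_]; case: (sW j).
have hw' j : Ws j (w' j) by rewrite /w'; case: eqP => [->//|_]; case: (sW j).
have := u w w' hw hw'; rewrite /w /w' !sum_if1 => /(_ erefl j1).
rewrite eqxx; case: eqP => // _ /eqP; by rewrite (negPf (e_neq0 _)).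
Qed.

Lemma dsf_char j v (l : 'I_n) : Ws j v -> v 0 l != 0 -> Ws j 'e_l.
Proof.
move=> hv nv; have [_ _ u] := ds.
pose u0 := fun j2 => \sum_l (if bo (Ws j2 'e_l) then v 0 l else 0) *: ('e_l : 'rV[K]_n).
pose w := fun j2 => if j2 == j then v else 0.
have hu j2 : Ws j2 (u0 j2).
  apply: submod_sum => // l2; case: boP => h; first by case: (sW j2) => _ _; apply.
  by rewrite scale0r; case: (sW j2).
have hw j2 : Ws j2 (w j2) by rewrite /w; case: eqP => [->//|_]; case: (sW j2).
have ev : \sum_j2 u0 j2 = \sum_j2 w j2.
  rewrite /w sum_if1; apply/rowP => l2; rewrite summxE.
  under eq_bigr do rewrite sum_e.
  have [j0 h0] := dsf_e l2.
  rewrite (bigD1 j0) //= big1 ?addr0.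
    by case: boP.
  move=> j2 nj; case: boP => // h2; by rewrite (dsf_uniq h2 h0) eqxx in nj.
have [j0 h0] := dsf_e l.
have e1 := u _ _ hu hw ev j0; rewrite /w in e1.
have e2 : u0 j0 0 l = v 0 l by rewrite sum_e; case: boP.
move: e1; case: eqP => [<- //|_] e1.
by move: nv; rewrite -e2 e1 mxE eqxx.
Qed.

Lemma dsf_back j v : (forall l, v 0 l != 0 -> Ws j 'e_l) -> Ws j v.
Proof.
move=> h; rewrite [v]row_sum_delta; apply: submod_sum => // l.
case: (eqVneq (v 0 l) 0) => [->|nv]; first by rewrite scale0r; case: (sW j).
by case: (sW j) => _ _; apply; apply: h.
Qed.
End Family.

Lemma mono (m : nat) (A : 'I_m -> 'I_n -> K) (B : 'I_n -> 'I_m -> K) :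
  (forall i, \sum_j A i j * B j i = 1) ->
  (forall j l, j != l -> \sum_i B j i * A i l = 0) ->
  forall i, exists j, A i j != 0 /\ forall l, l != j -> A i l = 0.
Proof.
move=> H1 H2 i.
case: (pickP (fun j => A i j * B j i != 0)) => [j /= nz|none]; last first.
  move: (H1 i); rewrite big1 => [/esym/eqP|j _]; first by rewrite oner_eq0.
  by move: (none j) => /= /negbFE /eqP.
exists j; split; first by apply: contraNneq nz => ->; rewrite mul0r.
have nB : B j i != 0 by apply: contraNneq nz => ->; rewrite mulr0.
move=> l nl; rewrite eq_sym in nl; have := sum_eq0K (H2 j l nl) (i:=i) isT.
by case/mul_eq0K => // /eqP; rewrite (negPf nB).
Qed.

Lemma std_basis : is_basis (fun j : 'I_n => ('e_j : 'rV[K]_n)).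
Proof.
split; first by move=> v; exists (fun j => v 0 j); exact: row_sum_delta.
by move=> c c' e i; have := sum_e c i; rewrite e sum_e.
Qed.

Lemma std_basis_line (j : 'I_n) : is_basis_line (fun v => exists c, v = c *: ('e_j : 'rV[K]_n)).
Proof. by exists n, (fun j : 'I_n => ('e_j : 'rV[K]_n)), j; split => //; exact: std_basis. Qed.

Lemma basis_line_std L : is_basis_line L ->
  exists j : 'I_n, forall v, L v <-> exists c, v = c *: ('e_j : 'rV[K]_n).
Proof.
case=> m [b [i [[span uniq] hL]]].
pose B := fun j : 'I_n => proj1_sig (constructive_indefinite_description _ (span 'e_j)).
have hB j : ('e_j : 'rV[K]_n) = \sum_i0 B j i0 *: b i0.
  by rewrite /B; case: constructive_indefinite_description.
pose A := fun (i0 : 'I_m) (j : 'I_n) => b i0 0 j.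
have H2 j l : j != l -> \sum_i0 B j i0 * A i0 l = 0.
  move=> nl; rewrite -[RHS](_ : ('e_j : 'rV[K]_n) 0 l = 0); last by rewrite e_entry (negPf nl).
  rewrite [in RHS]hB summxE; apply: eq_bigr => i0 _; by rewrite mxE.
have H1 i1 : \sum_j A i1 j * B j i1 = 1.
  have e1 : \sum_i0 (i0 == i1)%:R *: b i0 = \sum_i0 (\sum_j A i1 j * B j i0) *: b i0.
    transitivity (b i1).
      rewrite (eq_bigr (fun i0 => if i0 == i1 then b i0 else 0)) ?sum_if1 //.
      by move=> i0 _; case: eqP => _; rewrite ?scale1r ?scale0r.
    rewrite {1}[b i1]row_sum_delta.
    under [RHS]eq_bigr do rewrite scaler_suml.
    rewrite [RHS]exchange_big /=; apply: eq_bigr => j _.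
    by rewrite hB scaler_sumr; apply: eq_bigr => i0 _; rewrite scalerA.
  by have := uniq _ _ e1 i1; rewrite eqxx => <-.
have [j [nz z]] := mono H1 H2 i.
have bi : b i = A i j *: 'e_j by apply: single.
have [x hx] := sf nz.
exists j => v; rewrite hL; split => [[c ->]|[c ->]].
- by exists (c * A i j); rewrite bi scalerA.
- by exists (c * x); rewrite bi scalerA -mulrA (mulrC x) hx mulr1.
Qed.

Lemma nz_entry v : v != 0 -> exists l, v 0 l != 0.
Proof.
move=> nv; case: (pickP (fun l => v 0 l != 0)) => [l h|none]; first by exists l.
have v0 : v = 0.
  by apply/rowP => l; rewrite mxE; apply/eqP; move: (none l) => /negbFE.
by rewrite v0 eqxx in nv.
Qed.

Lemma invert_sc (W : 'rV[K]_n -> Prop) (c : K) x : is_submodule W -> c != 0 -> W (c *: x) -> W x.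
Proof.
case=> _ _ hs nc h; have [y hy] := sf nc.
by have := hs y _ h; rewrite scalerA mulrC hy scale1r.
Qed.

Lemma Wp_iff J J' : J =1 J' -> forall v, Wp J v <-> Wp J' v.
Proof. by move=> e v; split => h l /h; rewrite e. Qed.

Section Action.
Variables (G : Type) (mul : G -> G -> G) (one : G) (inv : G -> G) (act : G -> 'rV[K]_n -> 'rV[K]_n).
Hypothesis grp : is_group mul one inv.
Hypothesis rep : is_representation mul one act.

Lemma act0 g : act g 0 = 0.
Proof. case: rep => _ _ _ hs; by have := hs g 0 0; rewrite !scale0r. Qed.

Lemma act_sum g (I : finType) (F : I -> 'rV[K]_n) : act g (\sum_i F i) = \sum_i act g (F i).
Proof. by case: rep => _ _ ha _; apply: (big_morph (act g) (ha g) (act0 g)). Qed.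

Lemma act_entry g v l : act g v 0 l = \sum_j v 0 j * act g 'e_j 0 l.
Proof.
rewrite {1}[v]row_sum_delta act_sum summxE; apply: eq_bigr => j _.
by case: rep => _ _ _ ->; rewrite mxE.
Qed.

Lemma act_inv g v : act (inv g) (act g v) = v.
Proof. by case: rep => h1 hm _ _; case: grp => _ _ _ hi _; rewrite -hm hi h1. Qed.

Lemma act_inv' g v : act g (act (inv g) v) = v.
Proof. by case: rep => h1 hm _ _; case: grp => _ _ _ _ hi; rewrite -hm hi h1. Qed.

Lemma act_mono g (j : 'I_n) : exists l, act g 'e_j 0 l != 0 /\ forall l', l' != l -> act g 'e_j 0 l' = 0.
Proof.
apply: (@mono n (fun j l => act g 'e_j 0 l) (fun l j => act (inv g) 'e_l 0 j)).
- by move=> i; rewrite -act_entry act_inv e_entry eqxx.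
- by move=> i l nl; rewrite -act_entry act_inv' e_entry (negPf nl).
Qed.

Definition pi g (j : 'I_n) : 'I_n := odflt j [pick l | act g 'e_j 0 l != 0].

Lemma pi_nz g j : act g 'e_j 0 (pi g j) != 0.
Proof.
rewrite /pi; case: pickP => [l //|none].
have [l [nz _]] := act_mono g j; by move: (none l); rewrite /= nz.
Qed.

Lemma pi_z g j l : l != pi g j -> act g 'e_j 0 l = 0.
Proof.
have [l0 [nz z]] := act_mono g j.
have e : pi g j = l0 by apply: contraNeq (pi_nz g j) => /z ->.
by rewrite e; apply: z.
Qed.

Lemma pi_uniq g j l : act g 'e_j 0 l != 0 -> pi g j = l.
Proof. by move=> nz; apply/eqP; rewrite eq_sym; apply: contraNT nz => /pi_z ->. Qed.

Lemma pi_e g j : act g 'e_j = act g 'e_j 0 (pi g j) *: 'e_(pi g j).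
Proof. by apply: single => l; apply: pi_z. Qed.

Lemma pi_one j : pi one j = j.
Proof. by apply: pi_uniq; case: rep => -> _ _ _; rewrite e_entry eqxx oner_neq0. Qed.

Lemma pi_mul g h j : pi (mul g h) j = pi g (pi h j).
Proof.
apply: pi_uniq; case: rep => _ -> _ hs.
by rewrite pi_e hs mxE mul_neq0 // ?pi_nz.
Qed.

Lemma pi_inv g j : pi (inv g) (pi g j) = j.
Proof. by rewrite -pi_mul; case: grp => _ _ _ -> _; rewrite pi_one. Qed.

Definition stable J := forall g l, J l -> J (pi g l).

Lemma Wp_stable J : stable J -> is_subrep act (Wp J).
Proof.
move=> st; split; first exact: Wp_sub.
move=> g v hv l; rewrite act_entry; apply: contraNT => nJ.
apply/eqP; apply: big1 => j _.
case: (eqVneq (v 0 j) 0) => [->|nv]; first by rewrite mul0r.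
rewrite pi_z ?mulr0 //; apply: contraNneq nJ => ->; exact: st (hv _ nv).
Qed.

Lemma stableI J J' : stable J -> stable J' -> stable (predI J J').
Proof. by move=> s1 s2 g l /andP [h1 h2]; rewrite /= (s1 _ _ h1) (s2 _ _ h2). Qed.

Lemma stableC J : stable J -> stable (predC J).
Proof. by move=> s g l /= nJ; apply: contra nJ => /(s (inv g)); rewrite pi_inv. Qed.

Definition Rb (i l : 'I_n) := bo (exists g, pi g i = l).

Lemma Rb_refl i : Rb i i.
Proof. by apply/boP; exists one; rewrite pi_one. Qed.

Lemma Rb_trans i j l : Rb i j -> Rb j l -> Rb i l.
Proof.
move=> /boP [g <-] /boP [h <-]; apply/boP; exists (mul h g); by rewrite pi_mul.
Qed.

Lemma Rb_sym i j : Rb i j -> Rb j i.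
Proof. by move=> /boP [g <-]; apply/boP; exists (inv g); rewrite pi_inv. Qed.

Lemma Rb_pi g i : Rb i (pi g i).
Proof. by apply/boP; exists g. Qed.

Lemma stableRb r : stable (Rb r).
Proof. by move=> g l h; apply: Rb_trans h (Rb_pi g l). Qed.

Lemma indec_of J : stable J -> (exists l, J l) -> (forall l l', J l -> J l' -> Rb l l') ->
  indecomposable act (Wp J).
Proof.
move=> st [l0 Jl0] conn; split; first exact: Wp_stable.
  by exists 'e_l0; split; [exact: Wp_ee | exact: e_neq0].
move=> [W1 [W2 [[s1 st1] [s2 st2] [v1 [h1 nv1]] [v2 [h2 nv2]] ds]]].
have [l1 n1] := nz_entry nv1; have [l2 n2] := nz_entry nv2.
have E1 := ds2_W1 s1 s2 ds h1 n1.
have E2 := ds2_W1 s2 s1 (ds2_swap ds) h2 n2.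
have [i1 i2 _ _] := ds.
have /boP [g eg] := conn l1 l2 (i1 _ h1 _ n1) (i2 _ h2 _ n2).
have E3 : W1 'e_l2.
  have h := st1 g _ E1; rewrite pi_e in h.
  rewrite -eg; exact: (invert_sc s1 (pi_nz g l1) h).
exact: (ds2_notboth s1 s2 ds E3 E2).
Qed.

Lemma indec_conn J : stable J -> indecomposable act (Wp J) ->
  forall l l', J l -> J l' -> Rb l l'.
Proof.
move=> st [_ _ nd] l l' Jl Jl'; case nR: (Rb l l') => //; exfalso; apply: nd.
exists (Wp (predI J (Rb l))), (Wp (predI J (predC (Rb l)))); split.
- by apply: Wp_stable; apply: stableI => //; apply: stableRb.
- by apply: Wp_stable; apply: stableI => //; apply: stableC; apply: stableRb.
- by exists 'e_l; split; [apply: Wp_ee; rewrite /= Jl Rb_refl | exact: e_neq0].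
- by exists 'e_l'; split; [apply: Wp_ee; rewrite /= Jl' nR | exact: e_neq0].
- exact: split_ds.
Qed.


Definition isrep (i : 'I_n) := [forall l, Rb i l ==> (i <= l)%N].
Definition rep_of (l : 'I_n) := [arg min_(r < l | Rb l r) val r].

Lemma rep_ofP l : isrep (rep_of l) /\ Rb (rep_of l) l.
Proof.
rewrite /rep_of; case: arg_minnP; first exact: Rb_refl.
move=> r Rlr mn; split; last exact: Rb_sym.
apply/forallP => l'; apply/implyP => h; apply: mn; exact: Rb_trans Rlr h.
Qed.

Lemma rep_uniq r r' : isrep r -> isrep r' -> Rb r r' -> r = r'.
Proof.
move=> /forallP h /forallP h' R; apply/val_inj/eqP; rewrite eqn_leq.
by rewrite (implyP (h r') R) (implyP (h' r) (Rb_sym R)).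
Qed.

Definition SA := [set i | isrep i].

Lemma rep_in l : rep_of l \in SA.
Proof. by rewrite inE; case: (rep_ofP l). Qed.

Definition idx l : 'I_#|SA| := enum_rank_in (rep_in l) (rep_of l).

Lemma idx_val l : enum_val (idx l) = rep_of l.
Proof. by rewrite /idx enum_rankK_in // rep_in. Qed.

Lemma Rb_idx (j : 'I_#|SA|) l : Rb (enum_val j) l = (j == idx l).
Proof.
apply/idP/eqP => [h|->]; last by rewrite idx_val; case: (rep_ofP l).
have rj : isrep (enum_val j) by have := enum_valP j; rewrite inE.
have [rl Rl] := rep_ofP l.
have e : enum_val j = rep_of l by apply: rep_uniq rj rl (Rb_trans h (Rb_sym Rl)).
by rewrite /idx; move: (enum_valK_in (rep_in l) j); rewrite e => ->.
Qed.

Lemma part2 : exists (k : nat) (Ws : 'I_k -> 'rV[K]_n -> Prop),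
     [/\ (forall j, indecomposable act (Ws j)),
         direct_sum (@fullV K n) Ws &
         forall (k' : nat) (Ws' : 'I_k' -> 'rV[K]_n -> Prop),
           (forall j, indecomposable act (Ws' j)) -> direct_sum (@fullV K n) Ws' ->
           (forall j, exists j', forall v, Ws j v <-> Ws' j' v) /\
           (forall j', exists j, forall v, Ws j v <-> Ws' j' v)].
Proof.
exists #|SA|, (fun j => Wp (Rb (enum_val j))); split.
- move=> j; apply: indec_of; first exact: stableRb.
    by exists (enum_val j); apply: Rb_refl.
  by move=> l l' h h'; apply: Rb_trans (Rb_sym h) h'.
- split => //.
  + move=> v _; exists (fun j => proj (Rb (enum_val j)) v); split; first by move=> j; exact: Wp_proj.
    apply/rowP => l; rewrite summxE.
    under eq_bigr do rewrite mxE Rb_idx.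
    by rewrite sum_if1.
  + have z (w : 'I_#|SA| -> 'rV[K]_n) : (forall j, Wp (Rb (enum_val j)) (w j)) ->
        forall j l, j != idx l -> w j 0 l = 0.
      move=> hw j l nj; apply: contraNeq nj => /hw; by rewrite Rb_idx.
    have sm (w : 'I_#|SA| -> 'rV[K]_n) : (forall j, Wp (Rb (enum_val j)) (w j)) ->
        forall l, (\sum_j w j) 0 l = w (idx l) 0 l.
      move=> hw l; rewrite summxE (bigD1 (idx l)) //= big1 ?addr0 // => j; exact: z.
    move=> w w' hw hw' e j; apply/rowP => l.
    case: (eqVneq j (idx l)) => [->|nj]; last by rewrite !(z _ _ j l nj).
    by rewrite -sm // -sm // e.
- move=> k' Ws' ind ds.
  have sW j : is_submodule (Ws' j) by case: (ind j) => [[]].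
  have claim j' : exists l0, forall v, Ws' j' v <-> Wp (Rb l0) v.
    pose J := fun l => bo (Ws' j' 'e_l).
    have eW : Ws' j' = Wp J.
      apply: pred_ext => v; split => [h l nv|h]; first by apply/boP; exact: dsf_char h nv.
      by apply: dsf_back => // l /h /boP.
    have st : stable J.
      move=> g l /boP h; apply/boP; case: (ind j') => [[_ st1] _ _].
      have h2 := st1 g _ h; rewrite pi_e in h2; exact: invert_sc (sW j') (pi_nz g l) h2.
    have indJ : indecomposable act (Wp J) by rewrite -eW.
    have conn := indec_conn st indJ.
    case: (ind j') => _ [v [hv nv]] _.
    have [l0 n0] := nz_entry nv.
    have J0 : J l0 by apply/boP; exact: dsf_char hv n0.
    exists l0 => v'; rewrite eW; apply: Wp_iff => l.
    apply/idP/idP => [h|/boP [g <-]]; first exact: conn.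
    exact: st.
  split.
  + move=> j; have [j' hj'] := dsf_e sW ds (enum_val j).
    have [l0 hl0] := claim j'.
    exists j' => v; rewrite hl0.
    have R0 : Rb l0 (enum_val j).
      by move/hl0: hj' => /(_ (enum_val j)); rewrite e_entry eqxx oner_neq0 => /(_ isT).
    apply: Wp_iff => l; apply/idP/idP => h.
    * exact: Rb_trans R0 h.
    * exact: Rb_trans (Rb_sym R0) h.
  + move=> j'; have [l0 hl0] := claim j'.
    exists (idx l0) => v; rewrite hl0 idx_val.
    have [_ R0] := rep_ofP l0.
    apply: Wp_iff => l; apply/idP/idP => h.
    * exact: Rb_trans (Rb_sym R0) h.
    * exact: Rb_trans R0 h.
Qed.

Lemma fullV_Wp : @fullV K n = Wp predT.
Proof. by apply: pred_ext => v; split. Qed.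

Lemma part1 : indecomposable act (@fullV K n) <-> transitive_on_basis_lines act.
Proof.
rewrite fullV_Wp; split.
- move=> hI.
  have stT : stable predT by [].
  have conn := indec_conn stT hI.
  case: hI => _ [v0 [_ nv]] _; have [l0 _] := nz_entry nv.
  split; first by exists (fun v => exists c, v = c *: ('e_l0 : 'rV[K]_n)); exact: std_basis_line.
  move=> L1 L2 /basis_line_std [j1 h1] /basis_line_std [j2 h2].
  have /boP [g eg] := conn j1 j2 isT isT.
  have [x hx] := sf (pi_nz g j1).
  exists g => v; rewrite h2; split.
  + case=> c ->; exists ((c * x) *: 'e_j1); split; first by apply/h1; exists (c * x).
    case: rep => _ _ _ ->; by rewrite pi_e scalerA -mulrA (mulrC x) hx mulr1 eg.
  + case=> w [/h1 [c ->] ->]; exists (c * act g 'e_j1 0 (pi g j1)).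
    by rewrite -scalerA -eg -pi_e; case: rep => _ _ _ ->.
- case=> [[L hL] tr].
  have [j0 h0] := basis_line_std hL.
  have R l : Rb j0 l.
    have [g hg] := tr L _ hL (std_basis_line l).
    have [w [/h0 [c ->] e]] : act_line act g L 'e_l by apply/hg; exists 1; rewrite scale1r.
    apply/boP; exists g; apply: pi_uniq.
    apply: (contra_neq _ (oner_neq0 K)) => z.
    have := congr1 (fun u : 'rV[K]_n => u 0 l) e.
    by case: rep => _ _ _ hs; rewrite /= hs [in RHS]mxE z mulr0 e_entry eqxx.
  apply: indec_of => //; first by exists j0.
  by move=> l l' _ _; apply: Rb_trans (Rb_sym (R l)) (R l').
Qed.
End Action.
End Basic.

Theorem proposition3p10 (K : comNzSemiRingType) (G : Type) (mul : G -> G -> G)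
    (one : G) (inv : G -> G) (n : nat) (act : G -> 'rV[K]_n -> 'rV[K]_n) :
  semifield K -> zero_sum_free K -> is_group mul one inv ->
  is_representation mul one act ->
  (indecomposable act (@fullV K n) <-> transitive_on_basis_lines act) /\
  (exists (k : nat) (Ws : 'I_k -> 'rV[K]_n -> Prop),
     [/\ (forall j, indecomposable act (Ws j)),
         direct_sum (@fullV K n) Ws &
         forall (k' : nat) (Ws' : 'I_k' -> 'rV[K]_n -> Prop),
           (forall j, indecomposable act (Ws' j)) -> direct_sum (@fullV K n) Ws' ->
           (forall j, exists j', forall v, Ws j v <-> Ws' j' v) /\
           (forall j', exists j, forall v, Ws j v <-> Ws' j' v)]).
Proof.
move=> sf zsf grp rep; split.
- exact: (part1 sf zsf grp rep).
- exact: (part2 sf zsf grp rep).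
Qed.
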